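(* Let $\Omega\subset\mathbb{R}^n$ be a domain and let $\mathcal{S}$ be a valid subdivision for $\Omega$. Let $z_0,z\in\bigcup_{S\in\mathcal{S}}S$ and let $\{S_i:0\le i\le j\}\subset\mathcal{S}$ be a sequence with $z_0\in S_0$, $z\in S_j$, and $\partial S_i\cap\partial S_{i+1}\neq\emptyset$ for $0\le i<j$. Then \[ k(z,z_0;\Omega)\le 2\sum_{i=0}^{j}\frac{d(S_i)}{\delta(S_i)}. \]
   Context: A collection $\mathcal{S}$ of sets is a valid subdivision of a domain $\Omega$ if: each $S\in\mathcal{S}$ is a closed subset of $\Omega$; each $S\in\mathcal{S}$ is star-shaped (with respect to some point of $S$); for distinct $S,T\in\mathcal{S}$, $|S\cap T|=0$ (Lebesgue measure); $|\Omega\setminus\bigcup_{S\in\mathcal{S}}S|=0$; and for every pair $z_0,z\in\bigcup_{S\in\mathcal{S}}S$ there is a finite sequence $S_0,\dots,S_j\in\mathcal{S}$ with $z_0\in S_0$, $z\in S_j$ and $\partial S_i\cap\partial S_{i+1}\ne\emptyset$. For $S\in\mathcal{S}$, $d(S)$ is the diameter of $S$ and $\delta(S)$ is the distance from $S$ to $\partial\Omega$. The quasihyperbolic distance is $k(z,z_0;\Omega)=\inf_\gamma\int_\gamma\frac{d\sigma}{d(\zeta,\partial\Omega)}$ over rectifiable curves $\gamma\subset\Omega$ joining $z$ to $z_0$. *)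

(* Defs.v *)
From HB Require Import structures.
From mathcomp Require Import all_boot all_order all_algebra.
From mathcomp Require Import all_classical all_reals all_analysis.
Set Implicit Arguments. Unset Strict Implicit. Unset Printing Implicit Defensive.
Import Order.TTheory GRing.Theory Num.Theory.
Import numFieldNormedType.Exports.
Local Open Scope classical_set_scope.
Local Open Scope ring_scope.

Section Defs.
Variables (R : realType) (n : nat).
Notation V := 'rV[R]_n.

Definition enorm (x : V) : R := Num.sqrt (\sum_(i < n) x ord0 i ^+ 2).

Definition bdry (A : set V) : set V := closure A `\` interior A.

Definition domain (O : set V) : Prop := O !=set0 /\ open O /\ connected O.

Definition box (a b : V) : set V := [set x | forall i, a ord0 i <= x ord0 i <= b ord0 i].
Definition boxvol (a b : V) : R := \prod_(i < n) (b ord0 i - a ord0 i).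
Definition null_set (A : set V) : Prop :=
  forall eps : R, 0 < eps -> exists (a b : nat -> V),
    (forall k i, a k ord0 i <= b k ord0 i) /\
    A `<=` \bigcup_k box (a k) (b k) /\
    (forall N, \sum_(k < N) boxvol (a k) (b k) <= eps).

Definition rel_closed (O S : set V) : Prop := S `<=` O /\ closure S `&` O `<=` S.

Definition star_shaped (S : set V) : Prop :=
  exists2 p, S p & forall x, S x -> forall t : R, 0 <= t <= 1 ->
    S (p + t *: (x - p)).

Definition valid_subdivision (O : set V) (SS : set (set V)) : Prop :=
  (forall S, SS S -> rel_closed O S) /\
  (forall S, SS S -> star_shaped S) /\
  (forall S T, SS S -> SS T -> S <> T -> null_set (S `&` T)) /\
  null_set (O `\` \bigcup_(S in SS) S) /\
  (forall z0 z, (\bigcup_(S in SS) S) z0 -> (\bigcup_(S in SS) S) z ->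
     exists (j : nat) (Sq : nat -> set V),
       (forall i, (i <= j)%N -> SS (Sq i)) /\ Sq 0%N z0 /\ Sq j z /\
       (forall i, (i < j)%N -> bdry (Sq i) `&` bdry (Sq i.+1) !=set0)).

Definition diam (S : set V) : \bar R :=
  ereal_sup [set (enorm (x - y))%:E | x in S & y in S].
Definition dist_bd (O S : set V) : \bar R :=
  ereal_inf [set (enorm (x - y))%:E | x in S & y in bdry O].
Definition dist_pt (O : set V) (x : V) : \bar R := dist_bd O [set x].

(* the quotient a / b of extended nonnegative reals, with a/0 = +oo, a/+oo = 0 *)
Definition eratio (a b : \bar R) : \bar R :=
  match b with
  | r%:E => if r == 0 then +oo%E else (a * (r^-1)%:E)%E
  | +oo%E => 0%E
  | -oo%E => +oo%E
  end.

Definition partition (a b : R) (m : nat) (t : nat -> R) : Prop :=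
  t 0%N = a /\ t m = b /\ forall k, (k < m)%N -> t k <= t k.+1.

Definition curve_length (g : R -> V) (a b : R) : \bar R :=
  ereal_sup [set x | exists m t, partition a b m t /\
     x = (\sum_(k < m) enorm (g (t k.+1) - g (t k)))%:E].

Definition admissible_curve (O : set V) (z z0 : V) (g : R -> V) : Prop :=
  {within [set t : R | 0 <= t <= 1], continuous g} /\
  g 0 = z /\ g 1 = z0 /\ (forall t : R, 0 <= t <= 1 -> O (g t)) /\
  (curve_length g 0 1 < +oo)%E.

(* line integral  int_gamma f dsigma  of a nonnegative (extended-valued) f
   w.r.t. arc length, as the Riemann-Stieltjes integral of f(g(t)) against the
   arc-length function s(t), i.e. the supremum of the lower Darboux-Stieltjes
   sums (this coincides with the integral for continuous f). *)
Definition line_integral (f : V -> \bar R) (g : R -> V) : \bar R :=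
  ereal_sup [set x | exists m t, partition 0 1 m t /\
     x = (\sum_(k < m)
            (ereal_inf [set f (g s) | s in [set s : R | (t k <= s <= t k.+1)%R]] *
             curve_length g (t k) (t k.+1)))%E].

Definition qh_dist (O : set V) (z z0 : V) : \bar R :=
  ereal_inf [set line_integral (fun zeta => eratio 1%E (dist_pt O zeta)) g
            | g in admissible_curve O z z0].

End Defs.

(* Main.v *)
Require Import Defs.
From HB Require Import structures.
From mathcomp Require Import all_boot all_order all_algebra.
From mathcomp Require Import all_classical all_reals all_analysis.
From mathcomp Require Import ring lra zify.
Set Implicit Arguments. Unset Strict Implicit. Unset Printing Implicit Defensive.
Import Order.TTheory GRing.Theory Num.Theory.
Import numFieldNormedType.Exports.
Local Open Scope classical_set_scope.
Local Open Scope ring_scope.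

Section Enorm.
Variables (R : realType) (n : nat).
Notation V := 'rV[R]_n.
Implicit Types x y : V.

Lemma enorm_ge0 x : 0 <= enorm x.
Proof. exact: sqrtr_ge0. Qed.

Lemma sumsq_ge0 x : 0 <= \sum_(i < n) x ord0 i ^+ 2.
Proof. by apply: sumr_ge0 => i _; exact: sqr_ge0. Qed.

Lemma enorm_sq x : enorm x ^+ 2 = \sum_(i < n) x ord0 i ^+ 2.
Proof. by rewrite /enorm sqr_sqrtr // sumsq_ge0. Qed.

Lemma enormZ (a : R) x : enorm (a *: x) = `|a| * enorm x.
Proof.
rewrite /enorm (eq_bigr (fun i => a ^+ 2 * x ord0 i ^+ 2)); last first.
  by move=> i _; rewrite mxE exprMn.
by rewrite -mulr_sumr sqrtrM ?sqr_ge0 // sqrtr_sqr.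
Qed.

Lemma enormN x : enorm (- x) = enorm x.
Proof. by rewrite -scaleN1r enormZ normrN normr1 mul1r. Qed.

Lemma enormB x y : enorm (x - y) = enorm (y - x).
Proof. by rewrite -enormN opprB. Qed.

Lemma CS x y : (\sum_(i < n) x ord0 i * y ord0 i) ^+ 2 <=
  (\sum_(i < n) x ord0 i ^+ 2) * (\sum_(i < n) y ord0 i ^+ 2).
Proof.
set a := \sum_(i < n) x ord0 i ^+ 2; set b := \sum_(i < n) y ord0 i ^+ 2.
set s := \sum_(i < n) x ord0 i * y ord0 i.
have key t : 0 <= a * t ^+ 2 + 2 * s * t + b.
  have -> : a * t ^+ 2 + 2 * s * t + b =
     \sum_(i < n) (x ord0 i * t + y ord0 i) ^+ 2.
    rewrite /a /s /b mulr_suml mulr_sumr mulr_suml -!big_split /=.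
    by apply: eq_bigr => i _; ring.
  by apply: sumr_ge0 => i _; exact: sqr_ge0.
have a0 : 0 <= a by exact: sumsq_ge0.
have [a0'|apos] := eqVneq a 0.
  have s0 : s = 0.
    apply/eqP; apply/negPn/negP => sn0.
    have := key (- (b + 1) / (2 * s)); rewrite a0' mul0r add0r.
    have -> : 2 * s * (- (b + 1) / (2 * s)) = - (b + 1).
      by field; rewrite sn0.
    lra.
  by rewrite s0 a0' !mul0r expr0n.
have ap : 0 < a by rewrite lt_def apos a0.
have := key (- s / a).
have -> : a * (- s / a) ^+ 2 + 2 * s * (- s / a) + b = b - s ^+ 2 / a.
  by field; rewrite apos.
rewrite subr_ge0 ler_pdivrMr // => h; by rewrite mulrC.
Qed.

Lemma enormD x y : enorm (x + y) <= enorm x + enorm y.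
Proof.
rewrite -(ler_pXn2r (_ : 0 < 2)%N) ?nnegrE ?addr_ge0 ?enorm_ge0 //.
rewrite sqrrD !enorm_sq.
rewrite (eq_bigr (fun i => x ord0 i ^+ 2 + 2 * (x ord0 i * y ord0 i) + y ord0 i ^+ 2)); last first.
  by move=> i _; rewrite mxE; ring.
rewrite !big_split /= -mulr_sumr.
rewrite lerD2r lerD2l.
set s := \sum_(i < n) _.
suff h : s <= enorm x * enorm y by rewrite mulr2n; lra.
apply: le_trans (ler_norm s) _.
rewrite -(sqrtr_sqr s) /enorm -sqrtrM ?sumsq_ge0 //.
by apply: ler_wsqrtr; exact: CS.
Qed.

Lemma enorm_sum (I : Type) (r : seq I) (F : I -> V) :
  enorm (\sum_(i <- r) F i) <= \sum_(i <- r) enorm (F i).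
Proof.
elim/big_rec2: _ => [|i a v _ IH].
  by rewrite /enorm big1 ?sqrtr0 // => i _; rewrite mxE expr0n.
by apply: le_trans (enormD _ _) _; rewrite lerD2l.
Qed.

Lemma coord_le_enorm x i : `|x ord0 i| <= enorm x.
Proof.
rewrite -(sqrtr_sqr (x ord0 i)) /enorm; apply: ler_wsqrtr.
rewrite (bigD1 i) //= lerDl; apply: sumr_ge0 => k _; exact: sqr_ge0.
Qed.

Lemma mxnorm_le_enorm x : `|x| <= enorm x.
Proof.
rewrite [leLHS]/Num.Def.normr /= mx_normrE; apply: bigmax_le; first exact: enorm_ge0.
by move=> [i k] _ /=; rewrite (ord1 i); exact: coord_le_enorm.
Qed.

Lemma enorm_le_mxnorm x : enorm x ^+ 2 <= n%:R * `|x| ^+ 2.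
Proof.
rewrite enorm_sq -[n in n%:R]card_ord -sumr_const.
rewrite mulr_suml; apply: ler_sum => i _; rewrite mul1r -real_normK ?num_real //.
rewrite lerXn2r ?nnegrE ?normr_ge0 //.
rewrite [leRHS]/Num.Def.normr /= mx_normrE; apply/bigmax_geP; right; exists (ord0, i) => //.
Qed.

End Enorm.

Section Curve.
Variables (R : realType) (n : nat).
Notation V := 'rV[R]_n.
Variables (f : V -> \bar R) (O : set V) (K : R).

Lemma part_mono (a b : R) m t : Defs.partition a b m t ->
  forall k l, (k <= l <= m)%N -> t k <= t l.
Proof.
move=> [_ [_ Ht]] k l /andP[kl lm].
elim: l kl lm => [|l IH] kl lm.
  by rewrite leqn0 in kl; rewrite (eqP kl).
rewrite leq_eqVlt in kl; case/orP: kl => [/eqP -> //|kl].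
apply: le_trans (IH kl (ltnW lm)) (Ht _ lm).
Qed.

Lemma part_in (a b : R) m t : Defs.partition a b m t ->
  forall k, (k <= m)%N -> a <= t k <= b.
Proof.
move=> P k km; have [t0 [tm _]] := P.
apply/andP; split.
  by rewrite -t0; apply: (part_mono P); rewrite leq0n km.
by rewrite -tm; apply: (part_mono P); rewrite km leqnn.
Qed.

Lemma part_sum (a b : R) m t (M : R) : Defs.partition a b m t ->
  \sum_(k < m) M * (t k.+1 - t k) = M * (b - a).
Proof.
move=> [t0 [tm _]]; rewrite -mulr_sumr; congr (_ * _).
rewrite -(big_mkord xpredT (fun k => t k.+1 - t k)) telescope_sumr //.
by rewrite tm t0.
Qed.

Lemma length_lip (g : R -> V) s u M : s <= u ->
  (forall x y, s <= x -> x <= y -> y <= u -> enorm (g y - g x) <= M * (y - x)) ->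
  (curve_length g s u <= (M * (u - s))%:E)%E.
Proof.
move=> su H; apply: ge_ereal_sup => _ [m [t [P ->]]]; rewrite lee_fin.
rewrite -(part_sum M P); apply: ler_sum => k _.
have /andP[h1 h2] := part_in P (ltnW (ltn_ord k)).
have /andP[h3 h4] := part_in P (ltn_ord k).
apply: H => //.
by have [_ [_ Ht]] := P; apply: Ht.
Qed.

Lemma length_ge0 (g : R -> V) s u : s <= u -> (0 <= curve_length g s u)%E.
Proof.
move=> su; apply: le_trans (ereal_sup_ubound _); last first.
  exists 1%N, (fun k => if k == 0%N then s else u); split.
    by split => //; split => // -[|k] //; rewrite ltnS leqn0 => /eqP -> /=.
  reflexivity.
by rewrite big_ord1 /= lee_fin enorm_ge0.
Qed.

Definition Qp (g : R -> V) s u := exists c : R, 0 <= c /\ exists s' : R,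
  s <= s' <= u /\ O (g s') /\ (f (g s') <= c%:E)%E /\
  forall x y, s <= x -> x <= y -> y <= u -> c * enorm (g y - g x) <= K * (y - x).

Definition QQ (g : R -> V) a b := forall s u, a <= s -> s <= u -> u <= b -> Qp g s u.

Lemma Qp_bound (g : R -> V) s u : s <= u -> Qp g s u ->
  (ereal_inf [set f (g x) | x in [set x : R | (s <= x <= u)%R]] * curve_length g s u
     <= (K * (u - s))%:E)%E.
Proof.
move=> su [c [c0 [s' [s's [_ [fc H]]]]]].
have L0 := length_ge0 g su.
apply: le_trans (_ : (c%:E * curve_length g s u <= _)%E).
  apply: lee_wpmul2r => //; apply: le_trans fc.
  by apply: ereal_inf_lbound; exists s'.
have [c_0|cpos] := eqVneq c 0.
  rewrite c_0 mul0e lee_fin.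
  by have := H s u (lexx _) su (lexx _); rewrite c_0 mul0r.
have cp : 0 < c by rewrite lt_def cpos c0.
have := @length_lip g s u (K / c) su.
have H' : forall x y, s <= x -> x <= y -> y <= u -> enorm (g y - g x) <= K / c * (y - x).
  move=> x y h1 h2 h3; rewrite mulrAC ler_pdivlMr // mulrC; exact: H.
move=> /(_ H') hL.
apply: le_trans (lee_wpmul2l _ hL) _; first by rewrite lee_fin.
by rewrite -EFinM lee_fin mulrA mulrCA divff ?mulr1.
Qed.

Lemma lowersum (g : R -> V) :
  (forall s u, 0 <= s -> s <= u -> u <= 1 -> Qp g s u) ->
  (line_integral f g <= K%:E)%E.
Proof.
move=> HQ; apply: ge_ereal_sup => _ [m [t [P ->]]].
apply: le_trans (_ : (\sum_(k < m) (K * (t k.+1 - t k))%:E <= _)%E).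
  apply: lee_sum => k _.
  have /andP[h1 h2] := part_in P (ltnW (ltn_ord k)).
  have /andP[h3 h4] := part_in P (ltn_ord k).
  have hk : t k <= t k.+1 by have [_ [_ Ht]] := P; apply: Ht.
  exact: Qp_bound hk (HQ _ _ h1 hk h4).
by rewrite sumEFin lee_fin (part_sum K P) subr0 mulr1.
Qed.

Lemma QQ_cat (g : R -> V) a m b : QQ g a m -> QQ g m b -> QQ g a b.
Proof.
move=> H1 H2 s u hsa su hub.
have [um|mu] := leP u m; first exact: H1.
have [ms|sm] := leP m s; first exact: H2.
have [c1 [c10 [s1 [hs1 [hO1 [f1 H1']]]]]] := H1 s m hsa (ltW sm) (lexx _).
have [c2 [c20 [s2 [hs2 [hO2 [f2 H2']]]]]] := H2 m u (lexx _) (ltW mu) hub.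
have tri : forall c x y, 0 <= c -> c <= c1 -> c <= c2 ->
    s <= x -> x <= y -> y <= u -> c * enorm (g y - g x) <= K * (y - x).
  move=> c x y c0 cc1 cc2 sx xy yu.
  have [ym|my] := leP y m.
    apply: le_trans (H1' x y sx xy ym).
    by apply: ler_wpM2r => //; exact: enorm_ge0.
  have [mx|xm] := leP m x.
    apply: le_trans (H2' x y mx xy yu).
    by apply: ler_wpM2r => //; exact: enorm_ge0.
  have -> : g y - g x = (g y - g m) + (g m - g x) by rewrite addrA subrK.
  apply: le_trans (ler_wpM2l c0 (enormD _ _)) _.
  rewrite mulrDr.
  have e1 := H2' m y (lexx _) (ltW my) yu.
  have e2 := H1' x m sx (ltW xm) (lexx _).
  have e1' : c * enorm (g y - g m) <= K * (y - m).
    by apply: le_trans e1; apply: ler_wpM2r => //; exact: enorm_ge0.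
  have e2' : c * enorm (g m - g x) <= K * (m - x).
    by apply: le_trans e2; apply: ler_wpM2r => //; exact: enorm_ge0.
  have -> : K * (y - x) = K * (y - m) + K * (m - x) by ring.
  exact: lerD.
have [c12|c21] := leP c1 c2.
  exists c1; split => //; exists s1; split.
    by case/andP: hs1 => -> h; rewrite (le_trans h) // ltW.
  split => //; split => // x y; exact: tri.
exists c2; split => //; exists s2; split.
  by case/andP: hs2 => h ->; rewrite andbT (le_trans _ h) // ltW.
split => //; split => // x y; apply: tri => //; exact: ltW.
Qed.

End Curve.

Section Poly.
Variables (R : realType) (n : nat).
Notation V := 'rV[R]_n.

Definition clamp (x : R) : R := if x <= 0 then 0 else if 1 <= x then 1 else x.

Lemma clamp_lip a b : `|clamp a - clamp b| <= `|a - b|.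
Proof.
have h1 : a - b <= `|a - b| := ler_norm _.
have h2 : b - a <= `|a - b| by rewrite distrC; exact: ler_norm.
rewrite ler_norml /clamp.
case: (lerP a 0) => ha; case: (lerP b 0) => hb;
  try case: (lerP 1 a) => ha1; try case: (lerP 1 b) => hb1;
  apply/andP; split; lra.
Qed.


Variables (T : nat -> R) (P : nat -> V) (N : nat).
Hypothesis Tinc : forall r, (r < N)%N -> T r < T r.+1.

Definition polyg (t : R) : V :=
  P 0%N + \sum_(r < N) clamp ((t - T r) / (T r.+1 - T r)) *: (P r.+1 - P r).

Lemma T_mono k l : (k <= l <= N)%N -> T k <= T l.
Proof.
move=> /andP[kl lN]; elim: l kl lN => [|l IH] kl lN.
  by rewrite leqn0 in kl; rewrite (eqP kl).
rewrite leq_eqVlt in kl; case/orP: kl => [/eqP -> //|kl].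
exact: le_trans (IH kl (ltnW lN)) (ltW (Tinc lN)).
Qed.

Lemma poly_on r t : (r < N)%N -> T r <= t <= T r.+1 ->
  polyg t = P r + ((t - T r) / (T r.+1 - T r)) *: (P r.+1 - P r).
Proof.
move=> rN /andP[h1 h2].
have dT : 0 < T r.+1 - T r by rewrite subr_gt0 Tinc.
rewrite /polyg -(big_mkord xpredT (fun r' => clamp ((t - T r') / (T r'.+1 - T r')) *: (P r'.+1 - P r'))).
rewrite (@big_cat_nat _ _ _ r 0%N N) ?(ltnW rN) //= [\sum_(r <= i < N) _]big_ltn //=.
rewrite (eq_big_nat _ _ (F2 := fun r' => P r'.+1 - P r')); last first.
  move=> r' /andP[_ r'r].
  have dT' : 0 < T r'.+1 - T r' by rewrite subr_gt0 Tinc // (ltn_trans r'r).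
  have hT : T r'.+1 <= T r by apply: T_mono; rewrite r'r (ltnW rN).
  rewrite /clamp ifF; last by apply/negbTE; rewrite -ltNge divr_gt0 //; lra.
  by rewrite ifT ?scale1r // ler_pdivlMr // mul1r; lra.
rewrite telescope_sumr // big1_seq ?addr0; last first.
  move=> r' /andP[_]; rewrite mem_index_iota => /andP[rr' r'N].
  have hT : T r.+1 <= T r' by apply: T_mono; rewrite rr' (ltnW r'N).
  have dT' : 0 < T r'.+1 - T r' by rewrite subr_gt0 Tinc.
  rewrite /clamp ifT ?scale0r //.
  by rewrite pmulr_lle0 ?invr_gt0 //; lra.
have -> : clamp ((t - T r) / (T r.+1 - T r)) = (t - T r) / (T r.+1 - T r).
  have l0 : 0 <= (t - T r) / (T r.+1 - T r) by rewrite divr_ge0 //; lra.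
  have l1 : (t - T r) / (T r.+1 - T r) <= 1 by rewrite ler_pdivrMr // mul1r; lra.
  rewrite /clamp; case: ifPn => [h|_]; first by apply/eqP; rewrite eq_le h l0.
  by case: ifPn => // h; apply/eqP; rewrite eq_le h l1.
by rewrite addrA addrCA subrr addr0.
Qed.


Definition polyM := \sum_(r < N) enorm (P r.+1 - P r) / (T r.+1 - T r).

Lemma polyM_ge0 : 0 <= polyM.
Proof.
apply: sumr_ge0 => r _; apply: divr_ge0; first exact: enorm_ge0.
by rewrite subr_ge0 ltW // Tinc.
Qed.

Lemma poly_lip x y : enorm (polyg y - polyg x) <= polyM * `|y - x|.
Proof.
have -> : polyg y - polyg x = \sum_(r < N)
   (clamp ((y - T r) / (T r.+1 - T r)) - clamp ((x - T r) / (T r.+1 - T r))) *: (P r.+1 - P r).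
  rewrite /polyg opprD addrACA subrr add0r -sumrB.
  by apply: eq_bigr => r _; rewrite scalerBl.
apply: le_trans (@enorm_sum _ _ _ _ _) _.
rewrite /polyM mulr_suml; apply: ler_sum => r _.
have dT : 0 < T r.+1 - T r by rewrite subr_gt0 Tinc.
rewrite enormZ.
have -> : enorm (P r.+1 - P r) / (T r.+1 - T r) * `|y - x| =
  (`|y - x| / (T r.+1 - T r)) * enorm (P r.+1 - P r) by ring.
apply: ler_wpM2r; first exact: enorm_ge0.
apply: le_trans (clamp_lip _ _) _.
rewrite -mulrBl normrM (gtr0_norm (x := (T r.+1 - T r)^-1)) ?invr_gt0 //.
have -> : y - T r - (x - T r) = y - x by ring.
by [].
Qed.

Lemma poly_cont : continuous polyg.
Proof.
move=> t; apply/cvgrPdist_lt => e e0; apply/nbhs_normP.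
have M0 := polyM_ge0.
exists (e / (polyM + 1)); first by rewrite /= divr_gt0 //; lra.
move=> y /= hy.
apply: le_lt_trans (mxnorm_le_enorm _) _.
apply: le_lt_trans (poly_lip _ _) _.
have hy' : `|t - y| * (polyM + 1) < e by rewrite -ltr_pdivlMr //; lra.
have := normr_ge0 (t - y); nra.
Qed.


Variables (f : V -> \bar R) (O : set V) (K : R).

Definition seg_ok r := exists c : R, 0 <= c /\
  (forall l : R, 0 <= l <= 1 -> O (P r + l *: (P r.+1 - P r)) /\
       (f (P r + l *: (P r.+1 - P r)) <= c%:E)%E) /\
  c * enorm (P r.+1 - P r) <= K * (T r.+1 - T r).

Lemma seg_QQ r : (r < N)%N -> seg_ok r -> QQ f O K polyg (T r) (T r.+1).
Proof.
move=> rN [c [c0 [Hl Hc]]] s u h1 h2 h3.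
have dT : 0 < T r.+1 - T r by rewrite subr_gt0 Tinc.
exists c; split => //; exists s; split; first by rewrite lexx h2.
have sin : 0 <= (s - T r) / (T r.+1 - T r) <= 1.
  by rewrite divr_ge0 ?ler_pdivrMr //= ?mul1r; lra.
rewrite (poly_on rN); last by apply/andP; split; lra.
split; first by case: (Hl _ sin).
split; first by case: (Hl _ sin).
move=> x y hx hxy hy.
rewrite (poly_on rN (t := x)); last by apply/andP; split; lra.
rewrite (poly_on rN (t := y)); last by apply/andP; split; lra.
rewrite opprD addrACA subrr add0r -scalerBl enormZ.
have -> : (y - T r) / (T r.+1 - T r) - (x - T r) / (T r.+1 - T r) = (y - x) / (T r.+1 - T r).
  by rewrite -mulrBl; congr (_ * _); ring.
rewrite ger0_norm; last by apply: divr_ge0; lra.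
have -> : c * ((y - x) / (T r.+1 - T r) * enorm (P r.+1 - P r)) =
  (y - x) / (T r.+1 - T r) * (c * enorm (P r.+1 - P r)) by ring.
apply: le_trans (ler_wpM2l _ Hc) _; first by apply: divr_ge0; lra.
have -> : (y - x) / (T r.+1 - T r) * (K * (T r.+1 - T r)) = K * (y - x) * ((T r.+1 - T r) / (T r.+1 - T r)) by ring.
by rewrite divff ?mulr1 // gt_eqF.
Qed.

Lemma poly_QQ : (0 < N)%N -> (forall r, (r < N)%N -> seg_ok r) ->
  QQ f O K polyg (T 0) (T N).
Proof.
move=> N0 Hs.
suff H : forall k, (k < N)%N -> QQ f O K polyg (T 0) (T k.+1).
  by have := H N.-1; rewrite prednK //; apply.
elim => [|k IH] kN; first by apply: seg_QQ => //; apply: Hs.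
apply: (QQ_cat (IH (ltnW kN))); apply: seg_QQ => //; exact: Hs.
Qed.

End Poly.

Section Dist.
Variables (R : realType) (n : nat).
Notation V := 'rV[R]_n.
Implicit Types (O S : set V).

Lemma enorm0 : enorm (0 : V) = 0.
Proof. by rewrite -(scale0r (0 : V)) enormZ normr0 mul0r. Qed.

Lemma dist_bd_ge0 O S : (0 <= dist_bd O S)%E.
Proof.
apply: le_ereal_inf_tmp => _ [x Sx [y By <-]]; rewrite lee_fin; exact: enorm_ge0.
Qed.

Lemma dist_bd_empty O S : ~ (exists x, S x) -> dist_bd O S = +oo%E.
Proof.
move=> nS; apply/ereal_inf_pinfty => t [x Sx _]; exfalso; apply: nS; by exists x.
Qed.

Lemma dist_bd_emptyb O S : ~ (exists x, bdry O x) -> dist_bd O S = +oo%E.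
Proof.
move=> nS; apply/ereal_inf_pinfty => t [x Sx [y By _]]; exfalso; apply: nS; by exists y.
Qed.

Lemma diam_ge0 S x : S x -> (0 <= diam S)%E.
Proof.
move=> Sx; apply: le_trans (ereal_sup_ubound _); last by exists x => //; exists x.
rewrite lee_fin; exact: enorm_ge0.
Qed.

Lemma diam_ub S x y : S x -> S y -> ((enorm (x - y))%:E <= diam S)%E.
Proof. by move=> Sx Sy; apply: ereal_sup_ubound; exists x => //; exists y. Qed.

Lemma dist_pt_ge O S x : S x -> (dist_bd O S <= dist_pt O x)%E.
Proof.
move=> Sx; apply: ereal_inf_le_tmp => _ [y /= -> [b Bb <-]].
by exists x => //; exists b.
Qed.

Lemma eratio_ge0 O S : (0 <= eratio (diam S) (dist_bd O S))%E.
Proof.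
have [[x Sx]|nS] := pselect (exists x, S x); last first.
  by rewrite dist_bd_empty.
have := dist_bd_ge0 O S; have := diam_ge0 Sx.
case: (dist_bd O S) => [r| |] //= d0 r0.
case: ifPn => // _; apply: mule_ge0 => //; rewrite lee_fin invr_ge0; exact: r0.
Qed.


Lemma enorm_small (e : R) : 0 < e -> exists2 d : R, 0 < d &
  forall v : V, `|v| < d -> enorm v < e.
Proof.
move=> e0; set N : R := n%:R.
have N0 : 0 <= N by rewrite /N ler0n.
exists (e / (N + 1)); first by rewrite divr_gt0 //; lra.
move=> v hv.
set d := e / (N + 1) in hv.
have hd : d * (N + 1) = e by rewrite /d divfK //; apply/lt0r_neq0; lra.
have d0 : 0 < d by rewrite /d divr_gt0 //; lra.
have v0 := normr_ge0 v.
have h1 := enorm_le_mxnorm v.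
have h2 : `|v| ^+ 2 <= d ^+ 2 by rewrite lerXn2r ?nnegrE // ?ltW.
have h3 : enorm v ^+ 2 < e ^+ 2.
  apply: le_lt_trans h1 _.
  apply: le_lt_trans (ler_wpM2l N0 h2) _.
  rewrite -hd; nra.
by rewrite -(ltr_pXn2r (_ : 0 < 2)%N) ?nnegrE ?enorm_ge0 ?ltW.
Qed.

Lemma dist_bd_closure O S w : S `<=` O -> closure S w -> ~ O w -> dist_bd O S = 0%E.
Proof.
move=> SO cw nOw.
have bw : bdry O w.
  split; first exact: (closure_subset SO).
  by move=> /interior_subset.
apply/eqP; rewrite eq_le dist_bd_ge0 andbT.
apply/lee_addgt0Pr => e e0; rewrite add0e.
have [d d0 Hd] := enorm_small e0.
have [x [Sx bx]] := cw _ (nbhsx_ballx w d d0).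
move: bx; rewrite -ball_normE /= => bx.
apply: ge_ereal_inf; exists (enorm (x - w))%:E.
  by exists x => //; exists w.
by rewrite lee_fin ltW // Hd // distrC.
Qed.


Lemma lip_cont (g : R -> V) M : 0 <= M ->
  (forall x y, enorm (g y - g x) <= M * `|y - x|) -> continuous g.
Proof.
move=> M0 Hg t; apply/cvgrPdist_lt => e e0; apply/nbhs_normP.
exists (e / (M + 1)); first by rewrite /= divr_gt0 //; lra.
move=> y /= hy.
apply: le_lt_trans (mxnorm_le_enorm _) _.
apply: le_lt_trans (Hg _ _) _.
have hy' : `|t - y| * (M + 1) < e by rewrite -ltr_pdivlMr //; lra.
have := normr_ge0 (t - y); nra.
Qed.

Lemma rev_QQ (f : V -> \bar R) O K (g : R -> V) : QQ f O K g 0 1 ->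
  forall s u, 0 <= s -> s <= u -> u <= 1 -> Qp f O K (fun t => g (1 - t)) s u.
Proof.
move=> H s u h1 h2 h3.
have [c [c0 [s' [hs' [Os [fs Hc]]]]]] := H (1 - u) (1 - s) ltac:(lra) ltac:(lra) ltac:(lra).
exists c; split => //; exists (1 - s'); split; first by apply/andP; move/andP: hs'; lra.
rewrite opprB addrC subrK; split => //; split => //.
move=> x y hx hxy hy.
rewrite enormB.
have := Hc (1 - y) (1 - x) ltac:(lra) ltac:(lra) ltac:(lra).
by have -> : 1 - x - (1 - y) = y - x by ring.
Qed.

End Dist.

Theorem mainTheorem3 (R : realType) (n : nat) (O : set 'rV[R]_n)
  (SS : set (set 'rV[R]_n)) (z0 z : 'rV[R]_n) (j : nat) (Sq : nat -> set 'rV[R]_n) :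
  domain O -> valid_subdivision O SS ->
  (\bigcup_(S in SS) S) z0 -> (\bigcup_(S in SS) S) z ->
  (forall i, (i <= j)%N -> SS (Sq i)) -> Sq 0%N z0 -> Sq j z ->
  (forall i, (i < j)%N -> bdry (Sq i) `&` bdry (Sq i.+1) !=set0) ->
  (qh_dist O z z0 <=
     2%:E * \sum_(0 <= i < j.+1) eratio (diam (Sq i)) (dist_bd O (Sq i)))%E.
Proof.
move=> hO [Hcl [Hst _]] _ _ HS z0S zS Hb.
set E := fun i => eratio (diam (Sq i)) (dist_bd O (Sq i)).
have E0 : forall i, (0 <= E i)%E := fun i => eratio_ge0 O (Sq i).
have [[i0 [i0j Ei0]]|Hfin] := pselect (exists i, (i <= j)%N /\ E i = +oo%E).
  have -> : \sum_(0 <= i < j.+1) E i = +oo%E.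
    rewrite (bigD1_seq i0) ?mem_index_iota ?iota_uniq //=.
    rewrite Ei0 addye //.
    have h : (0 <= \sum_(i <- index_iota 0 j.+1 | i != i0) E i)%E by apply: sume_ge0.
    by move: h; case: (\sum_(i <- _ | _) _).
  by rewrite muleC gt0_mulye ?leey.
have Efin : forall i, (i <= j)%N -> E i != +oo%E.
  by move=> i ij; apply/eqP => Ei; apply: Hfin; exists i.
have SO : forall i, (i <= j)%N -> Sq i `<=` O.
  by move=> i ij; case: (Hcl _ (HS i ij)).
have Hne : forall i, (i <= j)%N -> exists x, Sq i x.
  move=> i ij; case: (ltngtP i j) => [ij'|ji|->]; last by exists z.
  - have [w [[cw _] _]] := Hb i ij'.
    have [x [Sx _]] := cw setT filterT; by exists x.
  - by move: ji; rewrite ltnNge ij.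
have Hw : forall i, exists w, (i < j)%N -> Sq i w /\ Sq i.+1 w.
  move=> i; have [ij|ij] := ltnP i j; last by exists 0.
  have [w [[cw1 _] [cw2 _]]] := Hb i ij.
  exists w => _.
  have Ow : O w.
    apply/not_notP => nOw.
    have := dist_bd_closure (SO i (ltnW ij)) cw1 nOw.
    have := Efin i (ltnW ij); rewrite /E /= => h1 h2; move: h1; rewrite h2.
    by rewrite (_ : 0%E = 0%:E) // /eratio eqxx.
  split; [apply: (proj2 (Hcl _ (HS i (ltnW ij)))) | apply: (proj2 (Hcl _ (HS i.+1 ij)))]; by split.
have [w Hw'] := choice Hw.
have Hp : forall i, exists p, (i <= j)%N -> Sq i p /\
    forall x, Sq i x -> forall t : R, 0 <= t <= 1 -> Sq i (p + t *: (x - p)).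
  move=> i; have [ij|ij] := leqP i j; last by exists 0.
  by have [p Sp Hp] := Hst _ (HS i ij); exists p.
have [p Hp'] := choice Hp.
pose f := fun zeta : 'rV[R]_n => eratio 1%E (dist_pt O zeta).
have Hc : forall i, exists ca : R * R, (i <= j)%N -> [/\ 0 <= ca.1, 0 <= ca.2,
    (forall x, Sq i x -> (f x <= ca.1%:E)%E),
    (forall x y, Sq i x -> Sq i y -> ca.1 * enorm (x - y) <= ca.2) &
    (ca.2%:E <= E i)%E].
  move=> i; have [ij|ij] := leqP i j; last by exists (0, 0).
  have [[b bb]|nb] := pselect (exists b, bdry O b); last first.
    exists (0, 0) => _ /=; split => //.
      move=> x _; rewrite /f /dist_pt dist_bd_emptyb //.
    by move=> x y _ _; rewrite mul0r.
  have [x0 Sx0] := Hne i ij.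
  have dge := dist_bd_ge0 O (Sq i).
  have dle : (dist_bd O (Sq i) <= (enorm (x0 - b))%:E)%E.
    by apply: ereal_inf_lbound; exists x0 => //; exists b.
  have Ei := Efin i ij.
  have Dge := diam_ge0 Sx0.
  move: Ei; rewrite /E /=.
  move: dge dle; case Hd: (dist_bd O (Sq i)) => [r| |] //= r0 _.
  case: ifPn => [_|rn0] //.
  have rp : 0 < r by rewrite lt_def rn0 /=; exact: r0.
  move: Dge; case HD: (diam (Sq i)) => [D| |] //= D0; last first.
    by rewrite gt0_mulye ?lte_fin ?invr_gt0 // eqxx.
  move=> _.
  exists (r^-1, D * r^-1) => _ /=; split.
  - by rewrite invr_ge0 ltW.
  - by rewrite mulr_ge0 // invr_ge0 ltW.
  - move=> x Sx; have := dist_pt_ge O Sx; rewrite Hd /f.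
    case: (dist_pt O x) => [q| |] /=; last 2 first.
    - by move=> _; rewrite lee_fin invr_ge0 ltW.
    - by rewrite leNgt ltNyr.
    move=> rq.
    have qp : 0 < q by apply: (lt_le_trans rp); rewrite -lee_fin.
    rewrite gt_eqF // mul1e lee_fin lef_pV2 ?posrE //.
  - move=> x y Sx Sy; have := diam_ub Sx Sy; rewrite HD lee_fin => h.
    rewrite mulrC; apply: ler_wpM2r => //; by rewrite invr_ge0 ltW.
  - by [].
have [ca Hca] := choice Hc.
apply/lee_addgt0Pr => e e0.
pose m := j.+1.
pose N := m.*2.
have N0 : (0 < N)%N by rewrite /N /m; lia.
have NR : 0 < (N%:R : R) by rewrite ltr0n.
pose eps := e / N%:R.
have eps0 : 0 < eps by rewrite divr_gt0.
pose om := fun r => (ca (r./2)).2 + eps.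
pose Z := \sum_(r < N) om r.
pose T := fun k => (\sum_(r < k) om r) / Z.
pose ex := fun i => if (i < j)%N then w i else z.
pose P := fun r => if odd r then p (r./2) else if r == 0%N then z0 else ex (r./2).-1.
have hsum : forall (h : nat -> R) k, \sum_(r < k.*2) h (r./2) = 2 * \sum_(i < k) h i.
  move=> h; elim => [|k IH]; first by rewrite !big_ord0 mulr0.
  rewrite doubleS !big_ord_recr /= IH /= uphalf_double doubleK; ring.
have a0 : forall i, (i <= j)%N -> 0 <= (ca i).2 by move=> i /Hca [].
have Zval : Z = 2 * \sum_(i < m) (ca i).2 + e.
  rewrite /Z /om big_split /= (hsum (fun i => (ca i).2)) sumr_const card_ord /eps.
  by rewrite -[e / N%:R *+ N]mulr_natr divfK // gt_eqF.
have Z0 : 0 < Z.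
  rewrite Zval; have : 0 <= \sum_(i < m) (ca i).2.
    by apply: sumr_ge0 => i _; apply: a0; rewrite -ltnS ltn_ord.
  lra.
have om0 : forall r, (r < N)%N -> 0 < om r.
  move=> r rN; rewrite /om; have : 0 <= (ca r./2).2.
    by apply: a0; rewrite -ltnS ltn_half_double.
  lra.
have TS : forall r, T r.+1 - T r = om r / Z.
  by move=> r; rewrite /T big_ord_recr /= mulrDl addrAC subrr add0r.
have Tinc : forall r, (r < N)%N -> T r < T r.+1.
  by move=> r rN; rewrite -subr_gt0 TS divr_gt0 // om0.
have T0 : T 0%N = 0 by rewrite /T big_ord0 mul0r.
have TN : T N = 1 by rewrite /T divff // gt_eqF.
have exS : forall i, (i <= j)%N -> Sq i (ex i).
  move=> i ij; rewrite /ex; case: ifPn => [ij'|].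
    by case: (Hw' i ij').
  by rewrite -leqNgt => ji; have -> : i = j by apply/eqP; rewrite eqn_leq ij ji.
have seg_in : forall r, (r < N)%N -> forall l : R, 0 <= l <= 1 ->
    Sq r./2 (P r + l *: (P r.+1 - P r)).
  move=> r rN l hl.
  have ij : (r./2 <= j)%N by rewrite -ltnS ltn_half_double.
  have [Sp Hst'] := Hp' _ ij.
  have hr := odd_double_half r.
  rewrite /P /= uphalf_half.
  case: (boolP (odd r)) => hodd /=.
    rewrite add0n.
    by apply: Hst' => //; apply: exS.
  rewrite add0n.
  have Hx : Sq r./2 (if r == 0%N then z0 else ex r./2.-1).
    case: eqP => [r0|rn0].
      by rewrite r0 /=.
    have i0 : (0 < r./2)%N by move: hr rn0; rewrite (negbTE hodd) add0n; lia.
    rewrite /ex; have -> : (r./2.-1 < j)%N by lia.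
    by have [_ ] := Hw' r./2.-1 ltac:(lia); rewrite prednK.
  set x := (if r == 0%N then z0 else ex r./2.-1) in Hx *.
  have -> : x + l *: (p r./2 - x) = p r./2 + (1 - l) *: (x - p r./2).
    by rewrite scalerBl scale1r -scalerN opprB addrCA addrA subrK addrC.
  by apply: Hst' => //; lra.
have segs : forall r, (r < N)%N -> seg_ok T P f O Z r.
  move=> r rN.
  have ij : (r./2 <= j)%N by rewrite -ltnS ltn_half_double.
  have [c0 a0' Hf Hd Ha] := Hca _ ij.
  exists (ca r./2).1; split => //; split.
    move=> l hl; split; first exact: (SO _ ij _ (seg_in r rN l hl)).
    exact: Hf (seg_in r rN l hl).
  have S0 := seg_in r rN 0 ltac:(lra); rewrite scale0r addr0 in S0.
  have S1 := seg_in r rN 1 ltac:(lra); rewrite scale1r addrC subrK in S1.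
  apply: le_trans (Hd _ _ S1 S0) _.
  rewrite TS mulrC divfK ?gt_eqF //.
  rewrite /om; lra.
have QQp := poly_QQ Tinc N0 segs.
rewrite T0 TN in QQp.
pose g := fun t => polyg T P N (1 - t).
have QQg := rev_QQ QQp.
pose M := @polyM R n T P N.
have M0 : 0 <= M := polyM_ge0 P Tinc.
have glip : forall x y, enorm (g y - g x) <= M * `|y - x|.
  move=> x y; apply: le_trans (poly_lip P Tinc _ _) _.
  have -> : 1 - y - (1 - x) = - (y - x) by ring.
  by rewrite normrN.
have PN : P N = z.
  rewrite /P /N odd_double /= doubleK.
  by rewrite /ex ltnn.
have adm : admissible_curve O z z0 g.
  split; first by apply: continuous_subspaceT; exact: lip_cont M0 glip.
  split.
    have hT : T N.-1 < T N.
      have h := Tinc N.-1; rewrite prednK // in h; exact: h.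
    rewrite /g subr0 -TN (poly_on P Tinc (r := N.-1)) ?prednK //; last first.
      by rewrite lexx andbT ltW.
    by rewrite divff ?gt_eqF ?subr_gt0 // scale1r addrC subrK.
  split.
    rewrite /g subrr -T0 (poly_on P Tinc (r := 0%N)) //; last first.
      by rewrite lexx /= ltW // Tinc.
    by rewrite subrr mul0r scale0r addr0.
  split.
    move=> t ht; have [h1 h2] : 0 <= t /\ t <= 1 by move/andP: ht.
    have [c [_ [s' [hs' [Os _]]]]] := QQg t t h1 (lexx _) h2.
    have -> : t = s' by apply/eqP; rewrite eq_le; exact: hs'.
    exact: Os.
  apply: le_lt_trans (length_lip (M := M) _ _) (ltry _) => //.
  move=> x y _ xy _; apply: le_trans (glip x y) _.
  by rewrite ger0_norm // subr_ge0.
apply: le_trans (ereal_inf_lbound _) _.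
  by exists g.
apply: le_trans (lowersum QQg) _.
rewrite Zval EFinD; apply: leeD2r; rewrite EFinM.
apply: lee_wpmul2l => //.
rewrite -sumEFin big_mkord; apply: lee_sum => i _.
by have [] := Hca i (ltn_ord i).
Qed.
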